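(* There exists an absolute constant $A \geq 10$ such that the following holds. Let $0 < \epsilon < 1$, $H \geq 1$, let $L_{1},L_{2} \subset \mathbb{H}$ be horizontal lines, let $p \in L_{1}$ and $r > 0$. If $$B(p,AH^{3}\epsilon^{-2}r) \cap L_{2} \subset N(L_{1},Hr),$$ then there exists a horizontal line $L \subset \mathbb{V}(L_{1})$ with $B(p,Hr) \cap L_{2} \subset N(L,\epsilon r)$.
   Context: $\mathbb{H}$ is $\mathbb{R}^{3}$ with group law $(x_{1},y_{1},t_{1}) \cdot (x_{2},y_{2},t_{2}) = (x_{1}+x_{2},y_{1}+y_{2},t_{1}+t_{2}+\tfrac{1}{2}(x_{1}y_{2}-x_{2}y_{1}))$, metric $d(p,q) = \|q^{-1}\cdot p\|$ with $\|(x,y,t)\| = \max\{\sqrt{x^{2}+y^{2}},\sqrt{|t|}\}$; $B(p,r)$ is the closed $d$-ball and $N(E,\delta) = \{q : \operatorname{dist}(q,E) \leq \delta\}$. A horizontal line is a set $q \cdot \{(sa,sb,0) : s \in \mathbb{R}\}$ with $(a,b) \neq 0$. For a horizontal line $L$, $\mathbb{V}(L)$ is the unique vertical plane containing $L$, i.e. $\{(x,y,t) : (x,y) \in \pi(L), t \in \mathbb{R}\}$ where $\pi(x,y,t) = (x,y)$. *)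

(* Defs.v *)
(* Heisenberg group H = R^3 with the Korányi-type max norm. *)
From Stdlib Require Import Reals Lra.
Open Scope R_scope.

Definition pt : Type := (R * R * R)%type.

Definition hmul (p q : pt) : pt :=
  match p, q with
  | (x1, y1, t1), (x2, y2, t2) =>
      (x1 + x2, y1 + y2, t1 + t2 + / 2 * (x1 * y2 - x2 * y1))
  end.

Definition hinv (p : pt) : pt :=
  match p with (x, y, t) => (- x, - y, - t) end.

Definition hnorm (p : pt) : R :=
  match p with (x, y, t) => Rmax (sqrt (x * x + y * y)) (sqrt (Rabs t)) end.

Definition hdist (p q : pt) : R := hnorm (hmul (hinv q) p).

Definition ball (p : pt) (r : R) : pt -> Prop := fun q => hdist p q <= r.

(* dist(q,E) <= delta, i.e. inf_{e in E} d(q,e) <= delta (E nonempty) *)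
Definition dist_le (q : pt) (E : pt -> Prop) (delta : R) : Prop :=
  forall eta, 0 < eta -> exists e, E e /\ hdist q e < delta + eta.

Definition nbhd (E : pt -> Prop) (delta : R) : pt -> Prop :=
  fun q => dist_le q E delta.

Definition is_hline (L : pt -> Prop) : Prop :=
  exists (q : pt) (a b : R), (a <> 0 \/ b <> 0) /\
    forall z, L z <-> exists s : R, z = hmul q (s * a, s * b, 0).

Definition proj (p : pt) : R * R := match p with (x, y, _) => (x, y) end.

Definition vplane (L : pt -> Prop) : pt -> Prop :=
  fun z => exists w, L w /\ proj w = proj z.

Definition subset (E F : pt -> Prop) : Prop := forall z, E z -> F z.
Definition inter (E F : pt -> Prop) : pt -> Prop := fun z => E z /\ F z.

(* Main.v *)
Require Import Defs.
From Stdlib Require Import Reals Lra Psatz Classical Nsatz.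
Open Scope R_scope.

Ltac tri := apply (f_equal2 (@pair _ _)); [apply (f_equal2 (@pair _ _))|].

Lemma abs_le_of_sq a b : 0 <= b -> a*a <= b*b -> Rabs a <= b.
Proof. intros hb h. unfold Rabs; destruct (Rcase_abs a); nra. Qed.

Lemma sq_le_of_abs a b : Rabs a <= b -> a*a <= b*b.
Proof. intros h. unfold Rabs in h; destruct (Rcase_abs a); nra. Qed.

Lemma abs_bounds x K : Rabs x <= K -> -K <= x <= K.
Proof. unfold Rabs; destruct (Rcase_abs x); lra. Qed.

Lemma abs_of_bounds x K : -K <= x <= K -> Rabs x <= K.
Proof. unfold Rabs; destruct (Rcase_abs x); lra. Qed.

Lemma hnorm_le_intro x y t K : 0 <= K -> x*x+y*y <= K*K -> Rabs t <= K*K ->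
  hnorm (x,y,t) <= K.
Proof.
  intros hK h1 h2. unfold hnorm. apply Rmax_lub;
  rewrite <- (sqrt_square K) by lra; apply sqrt_le_1_alt; lra.
Qed.

Lemma hnorm_le_elim x y t K : hnorm (x,y,t) <= K -> x*x+y*y <= K*K /\ Rabs t <= K*K.
Proof.
  unfold hnorm; intros h.
  pose proof (Rmax_l (sqrt (x*x+y*y)) (sqrt (Rabs t))).
  pose proof (Rmax_r (sqrt (x*x+y*y)) (sqrt (Rabs t))).
  pose proof (sqrt_pos (x*x+y*y)). pose proof (sqrt_pos (Rabs t)).
  pose proof (sqrt_sqrt (x*x+y*y) ltac:(nra)).
  pose proof (sqrt_sqrt (Rabs t) (Rabs_pos t)).
  split; nra.
Qed.

Definition rot (c d : R) (z : pt) : pt :=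
  match z with (x,y,t) => (c*x + d*y, -d*x + c*y, t) end.
Definition Fm (p : pt) (c d : R) (z : pt) : pt := rot c d (hmul (hinv p) z).

Lemma hmul_assoc a b c : hmul a (hmul b c) = hmul (hmul a b) c.
Proof.
  destruct a as [[a1 a2] a3], b as [[b1 b2] b3], c as [[c1 c2] c3]; simpl.
  tri; field.
Qed.

Lemma hmul_inv_cancel p w : hmul (hinv p) (hmul p w) = w.
Proof.
  destruct p as [[a1 a2] a3], w as [[b1 b2] b3]; simpl.
  tri; field.
Qed.

Lemma rot_hom c d z w : c*c+d*d = 1 -> rot c d (hmul z w) = hmul (rot c d z) (rot c d w).
Proof.
  intro h. destruct z as [[a1 a2] a3], w as [[b1 b2] b3]; simpl.
  tri; [ring|ring|nsatz].
Qed.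

Lemma rot_inv c d z : rot c d (hinv z) = hinv (rot c d z).
Proof. destruct z as [[a1 a2] a3]; simpl. tri; ring. Qed.

Lemma hnorm_rot c d z : c*c+d*d = 1 -> hnorm (rot c d z) = hnorm z.
Proof.
  intro h. destruct z as [[x y] t]; unfold hnorm; simpl.
  assert (E: (c*x+d*y)*(c*x+d*y)+(-d*x+c*y)*(-d*x+c*y) = x*x+y*y) by nsatz.
  rewrite E. reflexivity.
Qed.

Lemma inv_trans p w z : hmul (hinv (hmul (hinv p) w)) (hmul (hinv p) z) = hmul (hinv w) z.
Proof.
  destruct p as [[a1 a2] a3], w as [[b1 b2] b3], z as [[c1 c2] c3]; simpl.
  tri; field.
Qed.

Lemma hdist_F p c d z w : c*c+d*d = 1 -> hdist z w = hdist (Fm p c d z) (Fm p c d w).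
Proof.
  intro h. unfold hdist, Fm. rewrite <- rot_inv, <- rot_hom by exact h.
  rewrite hnorm_rot by exact h. rewrite inv_trans. reflexivity.
Qed.

Lemma F_hmul p c d z w : c*c+d*d = 1 -> Fm p c d (hmul z w) = hmul (Fm p c d z) (rot c d w).
Proof.
  intro h. unfold Fm. rewrite <- rot_hom by exact h. rewrite hmul_assoc. reflexivity.
Qed.

Lemma hnorm_inv0 v : hnorm (hmul (hinv v) (0,0,0)) = hnorm v.
Proof.
  destruct v as [[x y] t].
  assert (E: hmul (hinv (x,y,t)) (0,0,0) = (-x,-y,-t)) by (simpl; tri; ring).
  rewrite E. unfold hnorm. rewrite Rabs_Ropp.
  replace (-x*-x + -y*-y) with (x*x+y*y) by ring. reflexivity.
Qed.

Lemma hdist_hl X Y T s C : hdist (X,Y,T) (s,0,C) = hnorm (X - s, Y, T - C - s*Y*/2).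
Proof.
  unfold hdist.
  assert (E: hmul (hinv (s,0,C)) (X,Y,T) = (X - s, Y, T - C - s*Y*/2))
    by (simpl; tri; ring).
  rewrite E. reflexivity.
Qed.

Lemma hline_unit L : is_hline L -> exists q a b, a*a+b*b = 1 /\
  forall z, L z <-> exists s, z = hmul q (s*a, s*b, 0).
Proof.
  intros [q [a [b [hab HL]]]].
  assert (hpos: 0 < a*a+b*b) by (destruct hab; nra).
  set (N := sqrt (a*a+b*b)).
  assert (hN: 0 < N) by (apply sqrt_lt_R0; lra).
  assert (hNN: N*N = a*a+b*b) by (apply sqrt_sqrt; lra).
  exists q, (a/N), (b/N). split.
  - replace (a/N*(a/N)+b/N*(b/N)) with ((a*a+b*b)/(N*N)) by (field; lra).
    rewrite hNN. field; lra.
  - intro z. rewrite HL. split; intros [s hs]; subst z.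
    + exists (s*N). replace (s*N*(a/N)) with (s*a) by (field; lra).
      replace (s*N*(b/N)) with (s*b) by (field; lra). reflexivity.
    + exists (s/N). replace (s/N*a) with (s*(a/N)) by (field; lra).
      replace (s/N*b) with (s*(b/N)) by (field; lra). reflexivity.
Qed.

Lemma hline_shift q a b s0 s :
  hmul (hmul q (s0*a, s0*b, 0)) (s*a, s*b, 0) = hmul q ((s0+s)*a, (s0+s)*b, 0).
Proof. destruct q as [[x y] t]; simpl. tri; ring. Qed.

Lemma core (h e rho x0 y0 t0 u v : R) :
  0 < e -> e <= h -> rho * (e*e) = 1000 * (h*h*h) -> u*u+v*v = 1 ->
  x0*x0+y0*y0 <= h*h -> Rabs t0 <= h*h ->
  (forall s, (x0+s*u)*(x0+s*u)+(y0+s*v)*(y0+s*v) <= rho*rho ->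
      Rabs (t0 + s*/2*(x0*v - y0*u)) <= rho*rho ->
      exists m, (x0+s*u - m)*(x0+s*u-m) + (y0+s*v)*(y0+s*v) <= (2*h)*(2*h) /\
         Rabs (t0 + s*/2*(x0*v - y0*u) - 0 - m*(y0+s*v)*/2) <= (2*h)*(2*h)) ->
  forall s, (x0+s*u)*(x0+s*u)+(y0+s*v)*(y0+s*v) <= h*h ->
    (y0+s*v)*(y0+s*v) <= e*e /\
    Rabs (t0 + s*/2*(x0*v - y0*u) - (t0 - x0*y0*/2) - (x0+s*u)*(y0+s*v)*/2) <= e*e.
Proof.
  intros he heh hrho huv hx0 ht0 HYP s hs.
  assert (hh: 0 < h) by lra.
  assert (hee: e*e <= h*h) by nra.
  assert (hrho1: 1000*h <= rho).
  { assert (1000*h*(e*e) <= rho*(e*e)) by nra.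
    apply Rmult_le_reg_r with (e*e); nra. }
  assert (hrpos: 0 < rho) by lra.
  assert (hrhoe: 1000*(h*h) <= rho*e) by nra.
  assert (ax0: Rabs x0 <= h) by (apply abs_le_of_sq; nra).
  assert (ay0: Rabs y0 <= h) by (apply abs_le_of_sq; nra).
  assert (au: Rabs u <= 1) by (apply abs_le_of_sq; nra).
  assert (av: Rabs v <= 1) by (apply abs_le_of_sq; nra).
  apply abs_bounds in ax0, ay0, au, av, ht0.
  assert (APP: forall s1, Rabs s1 <= rho/4 ->
     -2*h <= y0 + s1*v <= 2*h /\
     Rabs (t0 + s1*/2*(x0*v - y0*u) - (x0+s1*u)*(y0+s1*v)*/2) <= 6*(h*h)).
  { intros s1 hs1. apply abs_bounds in hs1.
    assert (b1: Rabs (x0 + s1*u) <= h + rho/4).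
    { apply abs_of_bounds. split; nra. }
    assert (b2: Rabs (y0 + s1*v) <= h + rho/4).
    { apply abs_of_bounds. split; nra. }
    apply sq_le_of_abs in b1, b2.
    assert (b3: Rabs (t0 + s1*/2*(x0*v - y0*u)) <= rho*rho).
    { apply abs_of_bounds.
      assert (Rabs (s1 * (x0*v - y0*u)) <= rho/4 * (2*h)).
      { rewrite Rabs_mult. apply Rmult_le_compat; try apply Rabs_pos.
        - apply abs_of_bounds; lra.
        - apply abs_of_bounds; split; nra. }
      apply abs_bounds in H. split; nra. }
    assert (b4: (h + rho/4)*(h+rho/4) <= rho*rho/2) by nra.
    destruct (HYP s1 ltac:(lra) b3) as [m [hm1 hm2]].
    pose proof (Rle_0_sqr (x0 + s1*u - m)). pose proof (Rle_0_sqr (y0 + s1*v)).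
    unfold Rsqr in *.
    assert (hY: Rabs (y0 + s1*v) <= 2*h) by (apply abs_le_of_sq; lra).
    assert (hX: Rabs (x0 + s1*u - m) <= 2*h) by (apply abs_le_of_sq; lra).
    apply abs_bounds in hm2.
    assert (hP: Rabs ((x0 + s1*u - m)*(y0 + s1*v)) <= 2*h*(2*h)).
    { rewrite Rabs_mult. apply Rmult_le_compat; try apply Rabs_pos; assumption. }
    apply abs_bounds in hP, hY. split; [lra|].
    apply abs_of_bounds. split; nra. }
  destruct (APP (rho/4)) as [yA gA]. { apply abs_of_bounds; lra. }
  destruct (APP (-(rho/4))) as [yB gB]. { apply abs_of_bounds; lra. }
  destruct (APP 0) as [yC gC]. { apply abs_of_bounds; lra. }
  apply abs_bounds in gA, gB, gC.
  assert (kv: -8*h <= rho*v <= 8*h) by lra.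
  assert (kyu: -24*(h*h) <= rho*(y0*u) <= 24*(h*h)) by nra.
  assert (kuv: -384*(h*h) <= rho*rho*(u*v) <= 384*(h*h)) by nra.
  assert (vsm: v*v <= 1/10000) by nra.
  assert (uge: 1/2 <= Rabs u) by (unfold Rabs; destruct (Rcase_abs u); nra).
  pose proof (Rle_0_sqr (y0 + s*v)). unfold Rsqr in *.
  assert (hxs: Rabs (x0 + s*u) <= h) by (apply abs_le_of_sq; lra).
  apply abs_bounds in hxs.
  assert (hsu: Rabs (s*u) <= 2*h) by (apply abs_of_bounds; lra).
  rewrite Rabs_mult in hsu.
  assert (hs4: Rabs s <= 4*h) by (pose proof (Rabs_pos s); nra).
  assert (ry0: rho * Rabs y0 <= 48*(h*h)).
  { assert (Hyu: rho * Rabs (y0*u) <= 24*(h*h)).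
    { rewrite <- (Rabs_pos_eq rho) by lra. rewrite <- Rabs_mult. apply abs_of_bounds; lra. }
    rewrite Rabs_mult in Hyu. pose proof (Rabs_pos y0). nra. }
  assert (rv: rho * Rabs v <= 8*h).
  { rewrite <- (Rabs_pos_eq rho) by lra. rewrite <- Rabs_mult. apply abs_of_bounds; lra. }
  assert (rsv: rho * Rabs (s*v) <= 32*(h*h)).
  { rewrite Rabs_mult. pose proof (Rabs_pos s). pose proof (Rabs_pos v). nra. }
  split.
  - assert (HY: Rabs (y0 + s*v) <= e).
    { eapply Rle_trans. apply Rabs_triang. nra. }
    apply sq_le_of_abs in HY. lra.
  - replace (t0 + s*/2*(x0*v - y0*u) - (t0 - x0*y0*/2) - (x0+s*u)*(y0+s*v)*/2)
      with (- (s*(y0*u)) - (s*s)*(u*v)*/2) by field.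
    assert (r1: rho * Rabs (s*(y0*u)) <= 96*(h*h*h)).
    { rewrite Rabs_mult.
      assert (rho * Rabs (y0*u) <= 24*(h*h)).
      { rewrite <- (Rabs_pos_eq rho) by lra. rewrite <- Rabs_mult. apply abs_of_bounds; lra. }
      pose proof (Rabs_pos s). pose proof (Rabs_pos (y0*u)). nra. }
    assert (r2: rho*rho * Rabs ((s*s)*(u*v)) <= 6144*(h*h*(h*h))).
    { rewrite Rabs_mult.
      assert (rho*rho * Rabs (u*v) <= 384*(h*h)).
      { rewrite <- (Rabs_pos_eq (rho*rho)) by nra. rewrite <- Rabs_mult. apply abs_of_bounds; lra. }
      assert (Rabs (s*s) <= 16*(h*h)).
      { rewrite Rabs_mult. pose proof (Rabs_pos s). nra. }
      pose proof (Rabs_pos (s*s)). pose proof (Rabs_pos (u*v)). nra. }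
    assert (q1: Rabs (s*(y0*u)) <= 96/1000 * (e*e)) by nra.
    assert (hre2: 1000000*(h*h*(h*h)) <= rho*rho*(e*e)) by nra.
    assert (q2: Rabs ((s*s)*(u*v)) <= 1/100 * (e*e)).
    { apply Rmult_le_reg_l with (rho*rho); [nra|]. assert (0 <= h*h*(h*h)) by nra. lra. }
    apply abs_bounds in q1, q2. apply abs_of_bounds. split; nra.
Qed.

Theorem lemma3p5 :
  exists A : R, 10 <= A /\
    forall (eps H r : R) (L1 L2 : pt -> Prop) (p : pt),
      0 < eps -> eps < 1 -> 1 <= H ->
      is_hline L1 -> is_hline L2 -> L1 p -> 0 < r ->
      subset (inter (ball p (A * H ^ 3 * / (eps ^ 2) * r)) L2) (nbhd L1 (H * r)) ->
      exists L : pt -> Prop, is_hline L /\ subset L (vplane L1) /\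
        subset (inter (ball p (H * r)) L2) (nbhd L (eps * r)).
Proof.
  exists 1000. split; [lra|].
  intros eps H r L1 L2 p he1 he2 hH hL1 hL2 hp hr Hsub.
  destruct (hline_unit L1 hL1) as [q1 [a [b [hab HL1]]]].
  destruct (hline_unit L2 hL2) as [q2 [u [v [huv HL2]]]].
  destruct (proj1 (HL1 p) hp) as [s0 hs0].
  assert (HL1p : forall z, L1 z <-> exists s, z = hmul p (s*a, s*b, 0)).
  { intro z. rewrite HL1. split; intros [s hs]; subst.
    - exists (s - s0). rewrite hline_shift. replace (s0 + (s-s0)) with s by ring. reflexivity.
    - exists (s0+s). rewrite hline_shift. reflexivity. }
  set (F := Fm p a b).
  assert (Fp : F p = (0,0,0)).
  { unfold F, Fm. destruct p as [[x y] t]; simpl. tri; ring. }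
  assert (Hball : forall z K, ball p K z <-> hnorm (F z) <= K).
  { intros z K. unfold ball. rewrite (hdist_F p a b) by exact hab. fold F. rewrite Fp.
    unfold hdist. rewrite hnorm_inv0. tauto. }
  assert (FL1 : forall s C, F (hmul (hmul p (0,0,C)) (s*a, s*b, 0)) = (s, 0, C)).
  { intros s C. unfold F, Fm. rewrite <- hmul_assoc, hmul_inv_cancel. simpl.
    tri; [transitivity (s*(a*a+b*b)); [ring | rewrite hab; ring]|ring|ring]. }
  assert (FL1' : forall s, F (hmul p (s*a, s*b, 0)) = (s, 0, 0)).
  { intros s. rewrite <- (FL1 s 0). f_equal. destruct p as [[x y] t]; simpl. tri; ring. }
  set (h := H*r). set (e := eps*r). set (rho := 1000 * H^3 * /(eps^2) * r).
  destruct (classic (exists z0, inter (ball p h) L2 z0)) as [[z0 [hz0b hz0L]] | hno].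
  2: { exists L1. split; [exact hL1|split].
       - intros z hz. exists z. split; auto.
       - intros z hz. exfalso. apply hno. exists z. exact hz. }
  destruct (proj1 (HL2 z0) hz0L) as [s1 hs1].
  assert (HL2z : forall z, L2 z <-> exists s, z = hmul z0 (s*u, s*v, 0)).
  { intro z. rewrite HL2. split; intros [s hs]; subst.
    - exists (s - s1). rewrite hline_shift. replace (s1 + (s-s1)) with s by ring. reflexivity.
    - exists (s1+s). rewrite hline_shift. reflexivity. }
  set (u' := a*u + b*v). set (v' := -b*u + a*v).
  assert (huv' : u'*u'+v'*v' = 1) by (unfold u', v'; transitivity ((a*a+b*b)*(u*u+v*v)); [ring| rewrite hab, huv; ring]).
  destruct (F z0) as [[x0 y0] t0] eqn:Fz0.
  assert (FL2 : forall s, F (hmul z0 (s*u, s*v, 0)) =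
     (x0 + s*u', y0 + s*v', t0 + s*/2*(x0*v' - y0*u'))).
  { intro s. unfold F. rewrite F_hmul by exact hab. fold F. rewrite Fz0. simpl.
    unfold u', v'. tri; ring. }
  set (C := t0 - x0*y0*/2).
  assert (hpos : 0 < h) by (unfold h; nra).
  assert (hepos : 0 < e) by (unfold e; nra).
  assert (heh : e <= h) by (unfold e, h; nra).
  assert (hrho : rho * (e*e) = 1000 * (h*h*h)).
  { unfold rho, e, h. field. lra. }
  assert (hrhopos : 0 <= rho).
  { unfold rho. apply Rmult_le_pos; [|lra]. apply Rmult_le_pos.
    - assert (0 < H^3) by (apply pow_lt; lra). lra.
    - left. apply Rinv_0_lt_compat. apply pow_lt. lra. }
  assert (hz0 : hnorm (x0,y0,t0) <= h) by (rewrite <- Fz0; apply Hball; exact hz0b).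
  apply hnorm_le_elim in hz0. destruct hz0 as [hz0a hz0t].
  pose proof (core h e rho x0 y0 t0 u' v' hepos heh hrho huv' hz0a hz0t) as CORE.
  exists (fun w => exists s, w = hmul (hmul p (0,0,C)) (s*a, s*b, 0)).
  split; [|split].
  - exists (hmul p (0,0,C)), a, b. split.
    + destruct (Req_dec a 0); [right; nra | left; auto].
    + intro z. tauto.
  - intros z [s hs]. subst z. exists (hmul p (s*a, s*b, 0)). split.
    + apply HL1p. exists s. reflexivity.
    + destruct p as [[x y] t]; simpl. f_equal; ring.
  - intros z [hzb hzL] eta heta.
    destruct (proj1 (HL2z z) hzL) as [s hs]. subst z.
    apply Hball in hzb. rewrite FL2 in hzb. apply hnorm_le_elim in hzb.
    destruct hzb as [hzb1 hzb2].
    destruct (CORE ltac:(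
      intros s2 hX hT;
      assert (hb : ball p rho (hmul z0 (s2*u, s2*v, 0)))
        by (apply Hball; rewrite FL2; apply hnorm_le_intro; assumption);
      assert (hL : L2 (hmul z0 (s2*u, s2*v, 0))) by (apply HL2z; exists s2; reflexivity);
      destruct (Hsub _ (conj hb hL) h hpos) as [e1 [he1L he1d]];
      destruct (proj1 (HL1p e1) he1L) as [sig hsig]; subst e1;
      rewrite (hdist_F p a b) in he1d by exact hab; fold F in he1d;
      rewrite FL2, FL1' in he1d; rewrite hdist_hl in he1d;
      exists sig;
      apply (hnorm_le_elim _ _ _ (2*h)); unfold h in *; lra) s hzb1) as [c1 c2].
    exists (hmul (hmul p (0,0,C)) ((x0 + s*u')*a, (x0 + s*u')*b, 0)).
    split; [eexists; reflexivity|].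
    rewrite (hdist_F p a b) by exact hab. fold F. rewrite FL2, FL1, hdist_hl.
    assert (hnorm (x0 + s * u' - (x0 + s * u'), y0 + s * v',
      t0 + s * / 2 * (x0 * v' - y0 * u') - C - (x0 + s * u') * (y0 + s * v') * / 2) <= e).
    { apply hnorm_le_intro; [lra| |exact c2]. 
      replace (x0 + s * u' - (x0 + s * u')) with 0 by ring. lra. }
    unfold e in *. lra.
Qed.
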